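(* Let $p,q,r$ be distinct sentential variables. In the class of $\Delta$ models (described in the context), each of the following implications holds, where $\varphi\models_\Delta\psi$ means that $[\![\varphi]\!]_M\subseteq[\![\psi]\!]_M$ for every $\Delta$ model $M$: (a) $\mathbb{O}p\wedge(\neg p\succ\neg q)\models_\Delta \mathbb{O}q$; (b) $\mathbb{O}q\wedge(p\succ q)\models_\Delta \mathbb{O}p$; (c) $\mathbb{C}(p,q)\wedge p\models_\Delta \mathbb{O}q$; (d) $\mathbb{C}(p\wedge r,q)\wedge\mathbb{C}(p\wedge\neg r,q)\models_\Delta \mathbb{C}(p,q)$; (e) $\mathbb{C}(p,q)\models_\Delta \mathbb{C}(p\wedge r,q)\vee\mathbb{C}(p\wedge\neg r,q)$; (f) $\mathbb{O}(p\wedge q)\wedge\mathbb{O}(p\wedge\neg q)\models_\Delta \mathbb{O}p$.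
   Context: Fix a set $\mathrm{PROPS}$ of sentential variables (containing $p,q,r$). The language $\mathcal{L}$: every $v\in\mathrm{PROPS}$ is a formula; if $\varphi,\psi$ are formulas so are $\neg\varphi$, $(\varphi\wedge\psi)$, $(\varphi\succeq\psi)$. Abbreviations: $\vee,\rightarrow,\leftrightarrow$ as usual in terms of $\neg,\wedge$; $\varphi\succ\psi := (\varphi\succeq\psi)\wedge\neg(\psi\succeq\varphi)$; $\top := (v_0\rightarrow v_0)$ for a fixed variable $v_0$. Deontic operators: $\mathbb{C}(\varphi,\psi) := (\varphi\wedge\psi)\succ(\varphi\wedge\neg\psi)$ (conditional obligation); $\mathbb{O}\psi := \mathbb{C}(\top,\psi)$ (obligation); $\mathbb{P}\psi:=\neg\mathbb{O}\neg\psi$ (permission). A model is $M=(W,\sigma,u,t)$ with $W$ a nonempty set, $\sigma:W\times\{A\subseteq W:A\ne\emptyset\}\to W$ with $\sigma(w,A)\in A$, $u:W\to\mathbb{R}$, and $t:\mathrm{PROPS}\to\mathcal{P}(W)$. Semantics: $[\![v]\!]_M=t(v)$; $[\![\neg\theta]\!]_M=W\setminus[\![\theta]\!]_M$; $[\![\theta\wedge\psi]\!]_M=[\![\theta]\!]_M\cap[\![\psi]\!]_M$; $[\![\theta\succeq\psi]\!]_M=\emptyset$ if either $[\![\theta]\!]_M$ or $[\![\psi]\!]_M$ is empty, otherwise $\{w: u(\sigma(w,[\![\theta]\!]_M))\ge u(\sigma(w,[\![\psi]\!]_M))\}$. A model is a $\Delta$ model if (i) $W$ is the power set of $\mathrm{PROPS}$;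 (ii) $t(v)=\{w\in W: v\in w\}$ for each $v\in\mathrm{PROPS}$; (iii) $\sigma$ is $\Delta$-based: for all $w_0\in W$ and nonempty $A\subseteq W$ there is no $w_1\in A$ with $w_0\,\triangle\, w_1\subsetneq w_0\,\triangle\,\sigma(w_0,A)$, where $\triangle$ denotes symmetric difference of sets. The utility function $u$ is arbitrary. *)

(* Defs.v *)
From Stdlib Require Import Reals.
Open Scope R_scope.

Section Logic.
Variable PROPS : Type.

Inductive form : Type :=
| Var : PROPS -> form
| Neg : form -> form
| And : form -> form -> form
| Pref : form -> form -> form.

Definition Or (a b : form) : form := Neg (And (Neg a) (Neg b)).
Definition Imp (a b : form) : form := Neg (And a (Neg b)).
Definition Iff (a b : form) : form := And (Imp a b) (Imp b a).
Definition SPref (a b : form) : form := And (Pref a b) (Neg (Pref b a)).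
Definition Top (v0 : PROPS) : form := Imp (Var v0) (Var v0).
Definition CondO (a b : form) : form := SPref (And a b) (And a (Neg b)).
Definition Obl (v0 : PROPS) (b : form) : form := CondO (Top v0) b.
Definition Perm (v0 : PROPS) (b : form) : form := Neg (Obl v0 (Neg b)).

Definition world : Type := PROPS -> Prop.

Definition symdiff (X Y : world) : world :=
  fun v => (X v /\ ~ Y v) \/ (~ X v /\ Y v).

Definition strict_subset (X Y : world) : Prop :=
  (forall v, X v -> Y v) /\ (exists v, Y v /\ ~ X v).

(* A Delta model: W = power set of PROPS, t(v) = {w | v ∈ w},
   a Delta-based selection function sigma (only its values on nonempty
   sets A matter), and an arbitrary utility u. *)
Record DeltaModel : Type := {
  sigma : world -> (world -> Prop) -> world;
  u : world -> R;
  sigma_in : forall (w : world) (A : world -> Prop),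
      (exists x, A x) -> A (sigma w A);
  sigma_Delta : forall (w0 : world) (A : world -> Prop),
      (exists x, A x) ->
      ~ (exists w1, A w1 /\
           strict_subset (symdiff w0 w1) (symdiff w0 (sigma w0 A)))
}.

Definition tval (v : PROPS) : world -> Prop := fun w => w v.

Fixpoint sem (M : DeltaModel) (f : form) : world -> Prop :=
  match f with
  | Var v => tval v
  | Neg a => fun w => ~ sem M a w
  | And a b => fun w => sem M a w /\ sem M b w
  | Pref a b => fun w =>
      (exists x, sem M a x) /\ (exists y, sem M b y) /\
      u M (sigma M w (sem M a)) >= u M (sigma M w (sem M b))
  end.

Definition entails_Delta (a b : form) : Prop :=
  forall (M : DeltaModel) (w : world), sem M a w -> sem M b w.

End Logic.

Arguments Var {PROPS}.
Arguments Neg {PROPS}.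
Arguments And {PROPS}.
Arguments Pref {PROPS}.
Arguments SPref {PROPS}.
Arguments Top {PROPS}.
Arguments CondO {PROPS}.
Arguments Obl {PROPS}.
Arguments Or {PROPS}.
Arguments entails_Delta {PROPS}.

(* Main.v *)
Require Import Defs.
From Stdlib Require Import Reals Lra Classical FunctionalExtensionality PropExtensionality.
Open Scope R_scope.

Lemma sig_pt {PROPS : Type} (M : DeltaModel PROPS) (w : world PROPS)
  (A : world PROPS -> Prop) (t : world PROPS) :
  A t ->
  (A (Defs.sigma _ M w A) -> forall x, symdiff _ w t x -> symdiff _ w (Defs.sigma _ M w A) x) ->
  Defs.sigma _ M w A = t.
Proof.
  intros At H.
  assert (ne : exists x, A x) by (exists t; exact At).
  pose proof (sigma_in _ M w A ne) as Hs.
  specialize (H Hs).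
  apply functional_extensionality; intro v.
  apply propositional_extensionality.
  apply NNPP; intro Hn.
  apply (sigma_Delta _ M w A ne). exists t. split; [exact At|].
  split; [exact H|].
  exists v. specialize (H v). unfold symdiff in *.
  destruct (classic (w v)) as [hw|hw];
  destruct (classic (t v)) as [ht|ht];
  destruct (classic (Defs.sigma _ M w A v)) as [hs|hs]; try tauto;
  exfalso; apply Hn; tauto.
Qed.

Lemma spref_iff {PROPS : Type} (M : DeltaModel PROPS) (a b : form PROPS) w :
  (exists x, sem _ M a x) -> (exists y, sem _ M b y) ->
  (sem _ M (SPref a b) w <->
   Defs.u _ M (Defs.sigma _ M w (sem _ M a)) > Defs.u _ M (Defs.sigma _ M w (sem _ M b))).
Proof.
  intros ea eb. unfold SPref. simpl. split.
  - intros [[_ [_ h1]] h2]. destruct (Rle_or_lt (Defs.u _ M (Defs.sigma _ M w (sem _ M a)))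
      (Defs.u _ M (Defs.sigma _ M w (sem _ M b)))) as [h|h]; [|lra].
    exfalso; apply h2; repeat split; auto; lra.
  - intro h. split; [repeat split; auto; lra|].
    intros [_ [_ h']]. lra.
Qed.

Lemma spref_fwd {PROPS : Type} (M : DeltaModel PROPS) (a b : form PROPS) w :
  sem _ M (SPref a b) w -> (exists x, sem _ M a x) -> (exists y, sem _ M b y) ->
   Defs.u _ M (Defs.sigma _ M w (sem _ M a)) > Defs.u _ M (Defs.sigma _ M w (sem _ M b)).
Proof. intros h ea eb. apply (spref_iff M a b w ea eb). exact h. Qed.

Lemma spref_bwd {PROPS : Type} (M : DeltaModel PROPS) (a b : form PROPS) w :
  (exists x, sem _ M a x) -> (exists y, sem _ M b y) ->
   Defs.u _ M (Defs.sigma _ M w (sem _ M a)) > Defs.u _ M (Defs.sigma _ M w (sem _ M b)) ->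
  sem _ M (SPref a b) w.
Proof. intros ea eb h. apply (spref_iff M a b w ea eb). exact h. Qed.

Definition Wb {PROPS : Type} (p q r : PROPS) (w : world PROPS) (a b c : Prop) : world PROPS :=
  fun x => (x = p /\ a) \/ (x = q /\ b) \/ (x = r /\ c) \/ (x <> p /\ x <> q /\ x <> r /\ w x).

Section WbL.
Context {PROPS : Type} (p q r : PROPS) (hpq : p <> q) (hqr : q <> r) (hpr : p <> r) (w : world PROPS) (a b c : Prop).
Lemma Wb_p : Wb p q r w a b c p <-> a.
Proof. unfold Wb. split; [|tauto]. intros [[_ h]|[[h _]|[[h _]|[h _]]]]; congruence. Qed.
Lemma Wb_q : Wb p q r w a b c q <-> b.
Proof. unfold Wb. split; [|tauto]. intros [[h _]|[[_ h]|[[h _]|[_ [h _]]]]]; congruence. Qed.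
Lemma Wb_r : Wb p q r w a b c r <-> c.
Proof. unfold Wb. split; [|tauto]. intros [[h _]|[[h _]|[[_ h]|[_ [_ [h _]]]]]]; congruence. Qed.
Lemma Wb_o x : x <> p -> x <> q -> x <> r -> (Wb p q r w a b c x <-> w x).
Proof. unfold Wb. intros. split; [|tauto]. intros [[h _]|[[h _]|[[h _]|[_ [_ [_ h]]]]]]; congruence || tauto. Qed.
End WbL.

Ltac wbrw hpq hqr hpr :=
  repeat first [ rewrite (Wb_p _ _ _ hpq hpr) in * | rewrite (Wb_q _ _ _ hpq hqr) in * | rewrite (Wb_r _ _ _ hqr hpr) in * ].

Ltac solve_sig :=
  repeat match goal with H : _ > _ |- _ => clear H | H : sem _ _ _ _ |- _ => clear H end;
  match goal with
  | hpq : ?p <> ?q, hqr : ?q <> ?r, hpr : ?p <> ?r |- _ = Wb ?p ?q ?r _ _ _ _ =>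
   apply sig_pt;
   [ simpl; unfold tval; wbrw hpq hqr hpr; tauto
   | let Hs := fresh in let x := fresh in let Hx := fresh in
     intros Hs x Hx; simpl in Hs; unfold symdiff, tval in *;
     destruct (classic (x = p)); [subst x; wbrw hpq hqr hpr; tauto|];
     destruct (classic (x = q)); [subst x; wbrw hpq hqr hpr; tauto|];
     destruct (classic (x = r)); [subst x; wbrw hpq hqr hpr; tauto| ];
     rewrite Wb_o in Hx by assumption; tauto]
  end.

Ltac val w x := match goal with _ : w x |- _ => constr:(True) | _ : ~ w x |- _ => constr:(False) end.
Ltac flip P := match P with True => constr:(False) | False => constr:(True) end.

Ltac try_wb M w A p q r E :=
  let a := val w p in let b := val w q in let c := val w r in
  let a' := flip a in let b' := flip b in let c' := flip c in
  first [ assert (E : Defs.sigma _ M w A = Wb p q r w a b c) by solve_sig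
        | assert (E : Defs.sigma _ M w A = Wb p q r w a' b c) by solve_sig
        | assert (E : Defs.sigma _ M w A = Wb p q r w a b' c) by solve_sig
        | assert (E : Defs.sigma _ M w A = Wb p q r w a b c') by solve_sig
        | assert (E : Defs.sigma _ M w A = Wb p q r w a' b' c) by solve_sig
        | assert (E : Defs.sigma _ M w A = Wb p q r w a' b c') by solve_sig
        | assert (E : Defs.sigma _ M w A = Wb p q r w a b' c') by solve_sig
        | assert (E : Defs.sigma _ M w A = Wb p q r w a' b' c') by solve_sig ].

Ltac eval_sigs p q r :=
  repeat match goal with
  | H : context [Defs.sigma _ ?M ?w ?A] |- _ =>
      let E := fresh "E" in try_wb M w A p q r E; rewrite E in *; clear E
  | |- context [Defs.sigma _ ?M ?w ?A] =>
      let E := fresh "E" in try_wb M w A p q r E; rewrite E in *; clear E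
  end.

Ltac wbrw' := match goal with
  | hpq : ?p <> ?q, hqr : ?q <> ?r, hpr : ?p <> ?r |- context [Wb ?p ?q ?r] => wbrw hpq hqr hpr end.

Ltac ne p q r w :=
  first [ exists (Wb p q r w True True True); simpl; unfold tval; wbrw' ; tauto
        | exists (Wb p q r w True True False); simpl; unfold tval; wbrw' ; tauto
        | exists (Wb p q r w True False True); simpl; unfold tval; wbrw' ; tauto
        | exists (Wb p q r w True False False); simpl; unfold tval; wbrw' ; tauto
        | exists (Wb p q r w False True True); simpl; unfold tval; wbrw' ; tauto
        | exists (Wb p q r w False True False); simpl; unfold tval; wbrw' ; tauto
        | exists (Wb p q r w False False True); simpl; unfold tval; wbrw' ; tauto
        | exists (Wb p q r w False False False); simpl; unfold tval; wbrw' ; tauto ].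

Ltac cases3 p q r w :=
  destruct (classic (w p)); destruct (classic (w q)); destruct (classic (w r)).

Theorem proposition4p2 (PROPS : Type) (v0 p q r : PROPS)
  (hpq : p <> q) (hqr : q <> r) (hpr : p <> r) :
  let P := Var p in let Q := Var q in let Rr := Var r in
  entails_Delta (And (Obl v0 P) (SPref (Neg P) (Neg Q))) (Obl v0 Q) /\
  entails_Delta (And (Obl v0 Q) (SPref P Q)) (Obl v0 P) /\
  entails_Delta (And (CondO P Q) P) (Obl v0 Q) /\
  entails_Delta (And (CondO (And P Rr) Q) (CondO (And P (Neg Rr)) Q)) (CondO P Q) /\
  entails_Delta (CondO P Q) (Or (CondO (And P Rr) Q) (CondO (And P (Neg Rr)) Q)) /\
  entails_Delta (And (Obl v0 (And P Q)) (Obl v0 (And P (Neg Q)))) (Obl v0 P).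
Proof.
  cbv zeta.
  assert (epp : p = p) by reflexivity. assert (eqq : q = q) by reflexivity.
  assert (err : r = r) by reflexivity.
  assert (hqp : q <> p) by congruence. assert (hrq : r <> q) by congruence.
  assert (hrp : r <> p) by congruence.
  split; [|split; [|split; [|split; [|split]]]].
  5: { intros M w H. apply spref_fwd in H; [| ne p q r w | ne p q r w].
       cases3 p q r w; eval_sigs p q r; intros [nA nB].
       all: first [ (apply nA; apply spref_bwd; [ ne p q r w | ne p q r w |]; eval_sigs p q r; lra)
                  | (apply nB; apply spref_bwd; [ ne p q r w | ne p q r w |]; eval_sigs p q r; lra) ]. }
  5: { intros M w H; destruct H as [H1 H2].
       apply spref_fwd in H1; [| ne p q r w | ne p q r w].
       apply spref_fwd in H2; [| ne p q r w | ne p q r w].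
       apply spref_bwd; [ ne p q r w | ne p q r w |].
       cases3 p q r w; eval_sigs p q r; try lra.
       all: match goal with H: context [Defs.sigma _ ?M ?w ?A] |- _ =>
              destruct (classic (Defs.sigma _ M w A p)) end; eval_sigs p q r; lra. }
  all: intros M w H; destruct H as [H1 H2].
  all: apply spref_fwd in H1; [| ne p q r w | ne p q r w].
  all: try (apply spref_fwd in H2; [| ne p q r w | ne p q r w]).
  all: apply spref_bwd; [ ne p q r w | ne p q r w |].
  all: cases3 p q r w; eval_sigs p q r; try lra.
  all: simpl in H2; unfold tval in H2; tauto.
Qed.
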